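(* Let $D\subset\mathbb{R}^2$ be a domain and $v\colon D\to\mathbb{R}^2$ a diffeomorphism onto its image. Let $s,\mu,\theta\colon[0,\infty)\to\mathbb{R}$ be $C^2$ functions satisfying $$\cosh^2(s(t))\,\mu'(t)-\sinh^2(s(t))\,\theta'(t)=\text{constant},$$ and let $A(t)=\psi(s(t),\mu(t),\theta(t))$, where $$\psi(s,\mu,\theta)=\cosh(s)\begin{pmatrix}\cos\mu&-\sin\mu\\ \sin\mu&\cos\mu\end{pmatrix}+\sinh(s)\begin{pmatrix}\cos\theta&\sin\theta\\ \sin\theta&-\cos\theta\end{pmatrix}.$$ Then $\varphi(t,\alpha)=A(t)v(\alpha)$ is a solution of the Lagrangian incompressible Euler problem on $D$.
   Context: Primes denote derivatives with respect to $t$. Note $\psi$ takes values in $\mathbb{SL}(2)$ (real $2\times2$ matrices of determinant $1$). For $\varphi(t,\alpha)=\varphi^t(\alpha)$, $d\varphi^t$ is the Jacobian in $\alpha$. ''Solution of the Lagrangian incompressible Euler problem on $D$'' means: each $\varphi^t$ is a diffeomorphism of $D$ onto its image, $\det(d\varphi^t)=\det(d\varphi^0)\ne0$ for all $t\ge0$, and there is a scalar function $p(t,\alpha)$ with $(d\varphi^t)^T\varphi''+\nabla_\alpha p=0$. *)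

(* Defs.v *)
From Stdlib Require Import Reals.
Open Scope R_scope.

Definition dist2 (x y : R * R) : R :=
  Rmax (Rabs (fst x - fst y)) (Rabs (snd x - snd y)).

Definition open2 (U : R * R -> Prop) : Prop :=
  forall x, U x -> exists e, 0 < e /\ forall y, dist2 y x < e -> U y.

Definition connected2 (D : R * R -> Prop) : Prop :=
  forall U V : R * R -> Prop, open2 U -> open2 V ->
    (forall x, D x -> U x \/ V x) ->
    (exists x, D x /\ U x) -> (exists x, D x /\ V x) ->
    exists x, D x /\ U x /\ V x.

Definition domain2 (D : R * R -> Prop) : Prop :=
  (exists x, D x) /\ open2 D /\ connected2 D.

Definition partial1 (f : R * R -> R) (x : R * R) (l : R) : Prop :=
  derivable_pt_lim (fun u => f (u, snd x)) (fst x) l.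
Definition partial2 (f : R * R -> R) (x : R * R) (l : R) : Prop :=
  derivable_pt_lim (fun u => f (fst x, u)) (snd x) l.

Definition cont2_on (U : R * R -> Prop) (f : R * R -> R) : Prop :=
  forall x, U x -> forall eps, 0 < eps -> exists delta, 0 < delta /\
    forall y, U y -> dist2 y x < delta -> Rabs (f y - f x) < eps.

Definition C1_on (U : R * R -> Prop) (f : R * R -> R) : Prop :=
  exists f1 f2 : R * R -> R,
    (forall x, U x -> partial1 f x (f1 x) /\ partial2 f x (f2 x)) /\
    cont2_on U f1 /\ cont2_on U f2.

Definition C1map_on (U : R * R -> Prop) (f : R * R -> R * R) : Prop :=
  C1_on U (fun x => fst (f x)) /\ C1_on U (fun x => snd (f x)).

Definition image2 (D : R * R -> Prop) (f : R * R -> R * R) (y : R * R) : Prop :=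
  exists x, D x /\ f x = y.

Definition diffeo_onto_image (D : R * R -> Prop) (f : R * R -> R * R) : Prop :=
  open2 D /\ C1map_on D f /\
  (forall x y, D x -> D y -> f x = f y -> x = y) /\
  open2 (image2 D f) /\
  exists g : R * R -> R * R,
    (forall x, D x -> g (f x) = x) /\
    (forall y, image2 D f y -> D (g y) /\ f (g y) = y) /\
    C1map_on (image2 D f) g.

Definition hderiv (f f' : R -> R) : Prop :=
  forall t, 0 <= t -> forall eps, 0 < eps -> exists delta, 0 < delta /\
    forall h, h <> 0 -> 0 <= t + h -> Rabs h < delta ->
      Rabs ((f (t + h) - f t) / h - f' t) < eps.

Definition hcont (f : R -> R) : Prop :=
  forall t, 0 <= t -> forall eps, 0 < eps -> exists delta, 0 < delta /\
    forall u, 0 <= u -> Rabs (u - t) < delta -> Rabs (f u - f t) < eps.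

Definition C2_half (f f1 f2 : R -> R) : Prop :=
  hderiv f f1 /\ hderiv f1 f2 /\ hcont f2.

Record mat2 := Mat2 { m11 : R; m12 : R; m21 : R; m22 : R }.

Definition det2 (M : mat2) : R := m11 M * m22 M - m12 M * m21 M.

Definition mat2_add (M N : mat2) : mat2 :=
  Mat2 (m11 M + m11 N) (m12 M + m12 N) (m21 M + m21 N) (m22 M + m22 N).
Definition mat2_scal (a : R) (M : mat2) : mat2 :=
  Mat2 (a * m11 M) (a * m12 M) (a * m21 M) (a * m22 M).

Definition mat2_vec (M : mat2) (x : R * R) : R * R :=
  (m11 M * fst x + m12 M * snd x, m21 M * fst x + m22 M * snd x).

Definition mat2_tr (M : mat2) : mat2 := Mat2 (m11 M) (m21 M) (m12 M) (m22 M).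

Definition rot (mu : R) : mat2 := Mat2 (cos mu) (- sin mu) (sin mu) (cos mu).
Definition refl (th : R) : mat2 := Mat2 (cos th) (sin th) (sin th) (- cos th).

Definition psi (s mu th : R) : mat2 :=
  mat2_add (mat2_scal (cosh s) (rot mu)) (mat2_scal (sinh s) (refl th)).

Definition jacobian_at (f : R * R -> R * R) (x : R * R) (J : mat2) : Prop :=
  partial1 (fun y => fst (f y)) x (m11 J) /\ partial2 (fun y => fst (f y)) x (m12 J) /\
  partial1 (fun y => snd (f y)) x (m21 J) /\ partial2 (fun y => snd (f y)) x (m22 J).

(** Derivatives (Jacobian dphi^t, velocity phi',
   acceleration phi'') are unique when they exist, so they are existentially
   quantified witnesses here. *)
Definition lagrangian_euler_solution (D : R * R -> Prop) (phi : R -> R * R -> R * R) : Prop :=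
  (forall t, 0 <= t -> diffeo_onto_image D (phi t)) /\
  exists (J : R -> R * R -> mat2) (vel acc : R -> R * R -> R * R) (p : R -> R * R -> R),
    (forall t a, 0 <= t -> D a -> jacobian_at (phi t) a (J t a)) /\
    (forall t a, 0 <= t -> D a -> det2 (J t a) = det2 (J 0 a)) /\
    (forall a, D a -> det2 (J 0 a) <> 0) /\
    (forall a, D a ->
       hderiv (fun t => fst (phi t a)) (fun t => fst (vel t a)) /\
       hderiv (fun t => snd (phi t a)) (fun t => snd (vel t a)) /\
       hderiv (fun t => fst (vel t a)) (fun t => fst (acc t a)) /\
       hderiv (fun t => snd (vel t a)) (fun t => snd (acc t a))) /\
    (forall t a, 0 <= t -> D a ->
       exists g1 g2 : R,
         partial1 (p t) a g1 /\ partial2 (p t) a g2 /\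
         fst (mat2_vec (mat2_tr (J t a)) (acc t a)) + g1 = 0 /\
         snd (mat2_vec (mat2_tr (J t a)) (acc t a)) + g2 = 0).

(* Main.v *)
Require Import Defs.
From Stdlib Require Import Reals Lra Nsatz.
Open Scope R_scope.


Lemma lim_ext (f g : R -> R) (D D' : R -> Prop) l x0 :
  (forall x, D x -> D' x) -> (forall x, D x -> f x = g x) ->
  limit1_in f D' l x0 -> limit1_in g D l x0.
Proof.
  intros HD Hfg H eps Heps. destruct (H eps Heps) as [a [Ha Hx]].
  exists a; split; auto. intros x [Dx Hd]. rewrite <- Hfg by auto. apply Hx; auto.
Qed.

Lemma lim_const (c : R) D x0 : limit1_in (fun _ => c) D c x0.
Proof.
  intros eps Heps. exists 1; split; [lra|]. intros x _. simpl. unfold R_dist.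
  replace (c - c) with 0 by ring. rewrite Rabs_R0; lra.
Qed.

Lemma lim_id D x0 : limit1_in (fun x => x) D x0 x0.
Proof.
  intros eps Heps. exists eps; split; [lra|]. intros x [_ H]. exact H.
Qed.

Definition DH (t : R) := fun h => h <> 0 /\ 0 <= t + h.
Definition Q (f : R -> R) t := fun h => (f (t + h) - f t) / h.

Definition HD (f f' : R -> R) := forall t, 0 <= t -> limit1_in (Q f t) (DH t) (f' t) 0.

Lemma hderiv_HD f f' : HD f f' -> (forall t, 0 <= t -> forall eps, 0 < eps -> exists delta, 0 < delta /\
    forall h, h <> 0 -> 0 <= t + h -> Rabs h < delta ->
      Rabs ((f (t + h) - f t) / h - f' t) < eps).
Proof.
  intros H t Ht eps He. destruct (H t Ht eps He) as [a [Ha Hx]].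
  exists a; split; [lra|]. intros h H1 H2 H3. 
  specialize (Hx h). simpl in Hx. unfold R_dist, Q in Hx. apply Hx. split.
  split; auto. replace (h - 0) with h by ring; auto.
Qed.

Lemma HD_cont f f' t : HD f f' -> 0 <= t ->
  limit1_in (fun h => f (t + h)) (DH t) (f t) 0.
Proof.
  intros H Ht.
  apply lim_ext with (D' := DH t) (f := fun h => f t + Q f t h * h).
  - auto.
  - intros h [Hh _]. unfold Q. field. auto.
  - pose proof (limit_plus (fun _ => f t) (fun h => Q f t h * h) (DH t) (f t) (f' t * 0) 0
      (lim_const _ _ _) (limit_mul _ _ _ _ _ _ (H t Ht) (lim_id _ _))) as L.
    replace (f t + f' t * 0) with (f t) in L by ring. exact L.
Qed.

Lemma HD_plus u u' w w' : HD u u' -> HD w w' ->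
  HD (fun t => u t + w t) (fun t => u' t + w' t).
Proof.
  intros Hu Hw t Ht.
  apply lim_ext with (D' := DH t) (f := fun h => Q u t h + Q w t h).
  - auto.
  - intros h [Hh _]. unfold Q. field. auto.
  - apply limit_plus; auto.
Qed.

Lemma HD_mult u u' w w' : HD u u' -> HD w w' ->
  HD (fun t => u t * w t) (fun t => u' t * w t + u t * w' t).
Proof.
  intros Hu Hw t Ht.
  apply lim_ext with (D' := DH t) (f := fun h => Q u t h * w (t + h) + u t * Q w t h).
  - auto.
  - intros h [Hh _]. unfold Q. field. auto.
  - apply limit_plus. apply limit_mul; auto. apply HD_cont with w'; auto.
    apply limit_mul. apply lim_const. auto.
Qed.

Lemma HD_const c : HD (fun _ => c) (fun _ => 0).
Proof.
  intros t Ht. apply lim_ext with (D' := DH t) (f := fun _ => 0).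
  - auto.
  - intros h [Hh _]. unfold Q. field. auto.
  - apply lim_const.
Qed.

Definition Car (g : R -> R) (g' : R -> R) (y0 : R) := fun y =>
  if Req_EM_T y y0 then g' y0 else (g y - g y0) / (y - y0).

Lemma Car_lim g g' y0 : derivable_pt_lim g y0 (g' y0) ->
  limit1_in (Car g g' y0) (fun _ => True) (g' y0) y0.
Proof.
  intros H eps He. destruct (H eps He) as [d Hd].
  exists d; split. destruct d; simpl; lra.
  intros y [_ Hy]. simpl in *. unfold R_dist, Car in *.
  destruct (Req_EM_T y y0) as [E|E].
  - replace (g' y0 - g' y0) with 0 by ring. rewrite Rabs_R0; lra.
  - specialize (Hd (y - y0)). replace (y0 + (y - y0)) with y in Hd by ring.
    apply Hd; auto. intro; apply E; lra.
Qed.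

Lemma HD_comp g g' f f' : (forall y, derivable_pt_lim g y (g' y)) -> HD f f' ->
  HD (fun t => g (f t)) (fun t => g' (f t) * f' t).
Proof.
  intros Hg Hf t Ht.
  apply lim_ext with (D' := DH t)
    (f := fun h => Car g g' (f t) (f (t + h)) * Q f t h).
  - auto.
  - intros h [Hh _]. unfold Car, Q. destruct (Req_EM_T (f (t+h)) (f t)) as [E|E].
    + rewrite E. field. auto.
    + field. split; auto. intro; apply E; lra.
  - apply limit_mul; auto.
    eapply lim_ext with (D' := Dgf (DH t) (fun _ => True) (fun h => f (t + h))).
    + intros x Hx; split; auto.
    + intros; reflexivity.
    + apply limit_comp with (l := f t). apply HD_cont with f'; auto. apply Car_lim; auto.
Qed.

Lemma HD_unique f f1 f2 t : HD f f1 -> HD f f2 -> 0 <= t -> f1 t = f2 t.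
Proof.
  intros H1 H2 Ht. apply (single_limit (Q f t) (DH t) _ _ 0); auto.
  intros a Ha. exists (a/2). split. split. lra. lra.
  simpl; unfold R_dist. rewrite Rabs_right; lra.
Qed.

Lemma HD_ext f f' g : HD f f' -> (forall t, 0 <= t -> f' t = g t) -> HD f g.
Proof.
  intros H E t Ht. rewrite <- E by auto. auto.
Qed.

Lemma HD_fext f g f' : (forall t, 0 <= t -> f t = g t) -> HD f f' -> HD g f'.
Proof.
  intros E H t Ht. eapply lim_ext; [ | | apply (H t Ht)].
  - auto.
  - intros h [_ Hh]. unfold Q. rewrite !E by lra. reflexivity.
Qed.

Lemma HD_opp u u' : HD u u' -> HD (fun t => - u t) (fun t => - u' t).
Proof. intros H. apply (HD_fext (fun t => -1 * u t)). intros; ring. eapply HD_ext. apply (HD_mult (fun _ => -1) (fun _ => 0) u u'); auto using HD_const.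
 intros; simpl; ring. Qed.
Lemma HD_minus u u' w w' : HD u u' -> HD w w' -> HD (fun t => u t - w t) (fun t => u' t - w' t).
Proof. intros H1 H2. apply (HD_plus u u' (fun t => - w t) (fun t => - w' t)); auto. apply HD_opp; auto. Qed.
Lemma HD_sq u u' : HD u u' -> HD (fun t => (u t)^2) (fun t => u' t * u t + u t * u' t).
Proof. intros H. apply (HD_fext (fun t => u t * u t)). intros; ring. apply HD_mult; auto. Qed.
Lemma HD_cosh u u' : HD u u' -> HD (fun t => cosh (u t)) (fun t => sinh (u t) * u' t).
Proof. intros; apply (HD_comp cosh sinh); auto. apply derivable_pt_lim_cosh. Qed.
Lemma HD_sinh u u' : HD u u' -> HD (fun t => sinh (u t)) (fun t => cosh (u t) * u' t).
Proof. intros; apply (HD_comp sinh cosh); auto. apply derivable_pt_lim_sinh. Qed.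
Lemma HD_cos u u' : HD u u' -> HD (fun t => cos (u t)) (fun t => - sin (u t) * u' t).
Proof. intros; apply (HD_comp cos (fun y => - sin y)); auto. apply derivable_pt_lim_cos. Qed.
Lemma HD_sin u u' : HD u u' -> HD (fun t => sin (u t)) (fun t => cos (u t) * u' t).
Proof. intros; apply (HD_comp sin cos); auto. apply derivable_pt_lim_sin. Qed.

Ltac hd := match goal with
  | |- HD (fun _ => ?c) _ => apply (HD_const c)
  | |- HD ?f _ => eassumption
  | |- HD (fun t => @?u t + @?w t) _ => eapply (HD_plus u _ w _); hd
  | |- HD (fun t => @?u t - @?w t) _ => eapply (HD_minus u _ w _); hd
  | |- HD (fun t => @?u t * @?w t) _ => eapply (HD_mult u _ w _); hd
  | |- HD (fun t => - @?u t) _ => eapply (HD_opp u _); hd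
  | |- HD (fun t => (@?u t)^2) _ => eapply (HD_sq u _); hd
  | |- HD (fun t => cosh (@?u t)) _ => eapply (HD_cosh u _); hd
  | |- HD (fun t => sinh (@?u t)) _ => eapply (HD_sinh u _); hd
  | |- HD (fun t => cos (@?u t)) _ => eapply (HD_cos u _); hd
  | |- HD (fun t => sin (@?u t)) _ => eapply (HD_sin u _); hd
  end.



Lemma mvt_any f f' a b : (forall c, Rabs (c - a) <= Rabs (b - a) -> derivable_pt_lim f c (f' c)) ->
  exists c, Rabs (c - a) <= Rabs (b - a) /\ f b - f a = f' c * (b - a).
Proof.
  intros H. destruct (Rtotal_order a b) as [Hab|[Hab|Hab]].
  - destruct (MVT_cor2 f f' a b Hab) as [c [E Hc]].
    + intros c Hc. apply H. rewrite !Rabs_right; lra.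
    + exists c. split; auto. rewrite !Rabs_right; lra.
  - subst b. exists a. split. lra. ring.
  - destruct (MVT_cor2 f f' b a Hab) as [c [E Hc]].
    + intros c Hc. apply H. rewrite !Rabs_left1; lra.
    + exists c. split. rewrite !Rabs_left1; lra. lra.
Qed.

Lemma Rmax_lt a b e : Rmax a b < e <-> a < e /\ b < e.
Proof. unfold Rmax; destruct (Rle_dec a b); split; intros; lra. Qed.

Lemma Rmax_le a b e : Rmax a b <= e <-> a <= e /\ b <= e.
Proof. unfold Rmax; destruct (Rle_dec a b); split; intros; lra. Qed.

Lemma incr (U : R * R -> Prop) g g1 g2 y0 e :
  (forall y, dist2 y y0 < e -> U y) ->
  (forall x, U x -> partial1 g x (g1 x) /\ partial2 g x (g2 x)) ->
  forall y, dist2 y y0 < e -> exists x1 x2,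
    dist2 (x1, snd y) y0 <= dist2 y y0 /\ dist2 (fst y0, x2) y0 <= dist2 y y0 /\
    g y - g y0 = g1 (x1, snd y) * (fst y - fst y0) + g2 (fst y0, x2) * (snd y - snd y0).
Proof.
  intros HU Hp y Hy. destruct y as [y1 y2]. destruct y0 as [z1 z2].
  unfold dist2 in *; simpl in *.
  apply Rmax_lt in Hy. destruct Hy as [Hy1 Hy2].
  destruct (mvt_any (fun u => g (u, y2)) (fun u => g1 (u, y2)) z1 y1) as [x1 [Hx1 E1]].
  { intros c Hc. assert (U (c, y2)). { apply HU. unfold dist2; simpl. apply Rmax_lt; split; lra. }
    apply (Hp _ H). }
  destruct (mvt_any (fun u => g (z1, u)) (fun u => g2 (z1, u)) z2 y2) as [x2 [Hx2 E2]].
  { intros c Hc. assert (U (z1, c)). { apply HU. unfold dist2; simpl. apply Rmax_lt; split.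
      replace (z1 - z1) with 0 by ring. rewrite Rabs_R0. pose proof (Rabs_pos (y2 - z2)). lra. lra. }
    apply (Hp _ H). }
  exists x1, x2. split; [|split].
  - apply Rmax_le; split. eapply Rle_trans; [exact Hx1| apply Rmax_l]. apply Rmax_r.
  - apply Rmax_le; split. replace (z1 - z1) with 0 by ring. rewrite Rabs_R0.
    eapply Rle_trans; [apply Rabs_pos| apply Rmax_l].
    eapply Rle_trans; [exact Hx2| apply Rmax_r].
  - simpl in E1, E2. lra.
Qed.


Lemma bound_prod x y ex ey : Rabs x <= ex -> Rabs y <= ey -> Rabs (x*y) <= ex*ey.
Proof. intros. rewrite Rabs_mult. apply Rmult_le_compat; auto using Rabs_pos. Qed.

Lemma chain_curve U g g1 g2 c1 c2 u0 d1 d2 :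
  open2 U -> (forall x, U x -> partial1 g x (g1 x) /\ partial2 g x (g2 x)) ->
  cont2_on U g1 -> cont2_on U g2 -> U (c1 u0, c2 u0) ->
  derivable_pt_lim c1 u0 d1 -> derivable_pt_lim c2 u0 d2 ->
  derivable_pt_lim (fun u => g (c1 u, c2 u)) u0
    (g1 (c1 u0, c2 u0) * d1 + g2 (c1 u0, c2 u0) * d2).
Proof.
  intros HO Hp C1 C2 HU D1 D2 eps Heps.
  set (y0 := (c1 u0, c2 u0)) in *.
  set (a := g1 y0). set (b := g2 y0).
  destruct (HO y0 HU) as [e [He HB]].
  pose proof (Rabs_pos a). pose proof (Rabs_pos b).
  pose proof (Rabs_pos d1). pose proof (Rabs_pos d2).
  set (K := Rabs a + Rabs b + Rabs d1 + Rabs d2 + 2).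
  assert (HK : 0 < K) by (unfold K; lra).
  set (eta := Rmin 1 (eps / (2 * K))).
  assert (Heta: 0 < eta) by (apply Rmin_pos; [lra| apply Rdiv_lt_0_compat; lra]).
  assert (Heta1: eta <= 1) by apply Rmin_l.
  assert (Heta2: eta * K <= eps / 2).
  { assert (eta <= eps / (2 * K)) by apply Rmin_r.
    replace (eps / 2) with (eps / (2 * K) * K) by (field; lra).
    apply Rmult_le_compat_r; lra. }
  destruct (C1 y0 HU eta Heta) as [dl1 [Hdl1 G1]].
  destruct (C2 y0 HU eta Heta) as [dl2 [Hdl2 G2]].
  destruct (D1 eta Heta) as [dc1 Hc1].
  destruct (D2 eta Heta) as [dc2 Hc2].
  set (r := Rmin e (Rmin dl1 dl2)).
  assert (Hr: 0 < r) by (apply Rmin_pos; auto; apply Rmin_pos; auto).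
  assert (Hre : r <= e) by apply Rmin_l.
  assert (Hr1 : r <= dl1) by (eapply Rle_trans; [apply Rmin_r| apply Rmin_l]).
  assert (Hr2 : r <= dl2) by (eapply Rle_trans; [apply Rmin_r| apply Rmin_r]).
  set (M := Rabs d1 + Rabs d2 + 2).
  assert (HM : 0 < M) by (unfold M; lra).
  assert (Hdelta : 0 < Rmin dc1 (Rmin dc2 (r / M))).
  { apply Rmin_pos. apply cond_pos. apply Rmin_pos. apply cond_pos. apply Rdiv_lt_0_compat; lra. }
  exists (mkposreal _ Hdelta). intros h Hh0 Hh. simpl in Hh.
  assert (Hh1 : Rabs h < dc1) by (eapply Rlt_le_trans; [exact Hh| apply Rmin_l]).
  assert (Hh2 : Rabs h < dc2) by (eapply Rlt_le_trans; [exact Hh| eapply Rle_trans; [apply Rmin_r| apply Rmin_l]]).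
  assert (Hh3 : Rabs h < r / M) by (eapply Rlt_le_trans; [exact Hh| eapply Rle_trans; [apply Rmin_r| apply Rmin_r]]).
  set (q1 := (c1 (u0+h) - c1 u0)/h). set (q2 := (c2 (u0+h) - c2 u0)/h).
  assert (Q1 : Rabs (q1 - d1) < eta) by (apply Hc1; auto).
  assert (Q2 : Rabs (q2 - d2) < eta) by (apply Hc2; auto).
  assert (Q1' : Rabs q1 <= Rabs d1 + 1).
  { replace q1 with ((q1 - d1) + d1) by ring. eapply Rle_trans. apply Rabs_triang. lra. }
  assert (Q2' : Rabs q2 <= Rabs d2 + 1).
  { replace q2 with ((q2 - d2) + d2) by ring. eapply Rle_trans. apply Rabs_triang. lra. }
  assert (HhM : Rabs h * M < r).
  { replace r with (r / M * M) by (field; lra). apply Rmult_lt_compat_r; lra. }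
  assert (B1 : Rabs (c1 (u0+h) - c1 u0) < r).
  { replace (c1 (u0+h) - c1 u0) with (h * q1) by (unfold q1; field; auto).
    eapply Rle_lt_trans; [| exact HhM]. apply bound_prod. lra. unfold M; lra. }
  assert (B2 : Rabs (c2 (u0+h) - c2 u0) < r).
  { replace (c2 (u0+h) - c2 u0) with (h * q2) by (unfold q2; field; auto).
    eapply Rle_lt_trans; [| exact HhM]. apply bound_prod. lra. unfold M; lra. }
  set (y := (c1 (u0+h), c2 (u0+h))).
  assert (Hy : dist2 y y0 < r) by (unfold dist2; simpl; apply Rmax_lt; split; auto).
  destruct (incr U g g1 g2 y0 e (fun y H => HB y H) Hp y ltac:(lra)) as [x1 [x2 [P1 [P2 E]]]].
  simpl in E. change (snd y) with (c2 (u0+h)) in P1. change (fst y0) with (c1 u0) in P2.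
  assert (G1' : Rabs (g1 (x1, c2 (u0 + h)) - a) < eta).
  { apply G1. apply HB. lra. lra. }
  assert (G2' : Rabs (g2 (c1 u0, x2) - b) < eta).
  { apply G2. apply HB. lra. lra. }
  replace ((g y - g y0) / h - (a * d1 + b * d2))
    with ((g1 (x1, c2 (u0 + h)) - a) * q1 + a * (q1 - d1) + ((g2 (c1 u0, x2) - b) * q2 + b * (q2 - d2))).
  2:{ unfold q1, q2. rewrite E. field. auto. }
  assert (T1 : Rabs ((g1 (x1, c2 (u0 + h)) - a) * q1) <= eta * (Rabs d1 + 1)) by (apply bound_prod; lra).
  assert (T2 : Rabs (a * (q1 - d1)) <= Rabs a * eta) by (apply bound_prod; lra).
  assert (T3 : Rabs ((g2 (c1 u0, x2) - b) * q2) <= eta * (Rabs d2 + 1)) by (apply bound_prod; lra).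
  assert (T4 : Rabs (b * (q2 - d2)) <= Rabs b * eta) by (apply bound_prod; lra).
  eapply Rle_lt_trans. apply Rabs_triang.
  assert (Rabs ((g1 (x1, c2 (u0 + h)) - a) * q1 + a * (q1 - d1)) <= eta * (Rabs d1 + 1) + Rabs a * eta)
    by (eapply Rle_trans; [apply Rabs_triang | lra]).
  assert (Rabs ((g2 (c1 u0, x2) - b) * q2 + b * (q2 - d2)) <= eta * (Rabs d2 + 1) + Rabs b * eta)
    by (eapply Rle_trans; [apply Rabs_triang | lra]).
  assert (eta * (Rabs d1 + 1) + Rabs a * eta + (eta * (Rabs d2 + 1) + Rabs b * eta) = eta * K) by (unfold K; ring). lra.
Qed.


Lemma dpl_plus f h x l1 l2 : derivable_pt_lim f x l1 -> derivable_pt_lim h x l2 ->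
  derivable_pt_lim (fun u => f u + h u) x (l1 + l2).
Proof. intros; apply (derivable_pt_lim_plus f h); auto. Qed.
Lemma dpl_mult f h x l1 l2 : derivable_pt_lim f x l1 -> derivable_pt_lim h x l2 ->
  derivable_pt_lim (fun u => f u * h u) x (l1 * h x + f x * l2).
Proof. intros; apply (derivable_pt_lim_mult f h); auto. Qed.
Lemma dpl_const c x : derivable_pt_lim (fun _ => c) x 0.
Proof. apply (derivable_pt_lim_const c). Qed.
Lemma dpl_ext f x l l' : derivable_pt_lim f x l -> l = l' -> derivable_pt_lim f x l'.
Proof. intros H <-; auto. Qed.

Lemma dpl_lin f h x l1 l2 a b : derivable_pt_lim f x l1 -> derivable_pt_lim h x l2 ->
  derivable_pt_lim (fun u => a * f u + b * h u) x (a * l1 + b * l2).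
Proof.
  intros H1 H2. eapply dpl_ext. apply dpl_plus; apply dpl_mult; [apply dpl_const|exact H1|apply dpl_const|exact H2].
  simpl; ring.
Qed.

Lemma deriv_local f h x l r : 0 < r -> (forall u, Rabs (u - x) < r -> f u = h u) ->
  derivable_pt_lim f x l -> derivable_pt_lim h x l.
Proof.
  intros Hr E H eps He. destruct (H eps He) as [d Hd].
  assert (Hm : 0 < Rmin d r) by (apply Rmin_pos; [apply cond_pos| auto]).
  exists (mkposreal _ Hm). intros k Hk Hk'. simpl in Hk'.
  assert (Rabs k < d) by (eapply Rlt_le_trans; [exact Hk'| apply Rmin_l]).
  assert (Rabs k < r) by (eapply Rlt_le_trans; [exact Hk'| apply Rmin_r]).
  assert (Rabs (x + k - x) < r) by (replace (x + k - x) with k by ring; auto).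
  assert (Rabs (x - x) < r) by (replace (x - x) with 0 by ring; rewrite Rabs_R0; auto).
  rewrite <- !E by auto. apply Hd; auto.
Qed.

Lemma cont_lin U f h a b : cont2_on U f -> cont2_on U h ->
  cont2_on U (fun y => a * f y + b * h y).
Proof.
  intros Cf Ch x Ux eps He.
  pose proof (Rabs_pos a); pose proof (Rabs_pos b).
  set (e' := eps / (2 * (Rabs a + Rabs b + 1))).
  assert (He' : 0 < e') by (unfold e'; apply Rdiv_lt_0_compat; lra).
  destruct (Cf x Ux e' He') as [d1 [Hd1 F1]].
  destruct (Ch x Ux e' He') as [d2 [Hd2 F2]].
  exists (Rmin d1 d2). split. apply Rmin_pos; auto.
  intros y Uy Hy.
  assert (dist2 y x < d1) by (eapply Rlt_le_trans; [exact Hy| apply Rmin_l]).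
  assert (dist2 y x < d2) by (eapply Rlt_le_trans; [exact Hy| apply Rmin_r]).
  specialize (F1 y Uy H1). specialize (F2 y Uy H2).
  replace (a * f y + b * h y - (a * f x + b * h x)) with (a * (f y - f x) + b * (h y - h x)) by ring.
  eapply Rle_lt_trans. apply Rabs_triang.
  assert (Rabs (a * (f y - f x)) <= Rabs a * e') by (apply bound_prod; lra).
  assert (Rabs (b * (h y - h x)) <= Rabs b * e') by (apply bound_prod; lra).
  assert (Rabs a * e' + Rabs b * e' < eps).
  { unfold e'. apply Rmult_lt_reg_r with (2 * (Rabs a + Rabs b + 1)). lra.
    field_simplify; try lra. nra. }
  lra.
Qed.

Definition nrm (N : mat2) := Rabs (m11 N) + Rabs (m12 N) + Rabs (m21 N) + Rabs (m22 N).

Lemma nrm_pos N : 0 <= nrm N.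
Proof. unfold nrm. pose proof (Rabs_pos (m11 N)); pose proof (Rabs_pos (m12 N));
  pose proof (Rabs_pos (m21 N)); pose proof (Rabs_pos (m22 N)); lra. Qed.

Lemma lin_dist N z y : dist2 (mat2_vec N z) (mat2_vec N y) <= nrm N * dist2 z y.
Proof.
  destruct z as [z1 z2], y as [y1 y2]. unfold dist2, mat2_vec, nrm. simpl.
  set (d := Rmax (Rabs (z1 - y1)) (Rabs (z2 - y2))).
  assert (D1 : Rabs (z1 - y1) <= d) by apply Rmax_l.
  assert (D2 : Rabs (z2 - y2) <= d) by apply Rmax_r.
  pose proof (Rabs_pos (m11 N)); pose proof (Rabs_pos (m12 N));
  pose proof (Rabs_pos (m21 N)); pose proof (Rabs_pos (m22 N)).
  apply Rmax_le; split.
  - replace (m11 N * z1 + m12 N * z2 - (m11 N * y1 + m12 N * y2)) with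
      (m11 N * (z1 - y1) + m12 N * (z2 - y2)) by ring.
    eapply Rle_trans. apply Rabs_triang.
    assert (Rabs (m11 N * (z1 - y1)) <= Rabs (m11 N) * d) by (apply bound_prod; lra).
    assert (Rabs (m12 N * (z2 - y2)) <= Rabs (m12 N) * d) by (apply bound_prod; lra).
    assert (0 <= d) by (eapply Rle_trans; [apply Rabs_pos | exact D1]). nra.
  - replace (m21 N * z1 + m22 N * z2 - (m21 N * y1 + m22 N * y2)) with
      (m21 N * (z1 - y1) + m22 N * (z2 - y2)) by ring.
    eapply Rle_trans. apply Rabs_triang.
    assert (Rabs (m21 N * (z1 - y1)) <= Rabs (m21 N) * d) by (apply bound_prod; lra).
    assert (Rabs (m22 N * (z2 - y2)) <= Rabs (m22 N) * d) by (apply bound_prod; lra).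
    assert (0 <= d) by (eapply Rle_trans; [apply Rabs_pos | exact D1]). nra.
Qed.

Lemma cont_comp_lin (U U' : R * R -> Prop) f N : cont2_on U f ->
  (forall y, U' y -> U (mat2_vec N y)) -> cont2_on U' (fun y => f (mat2_vec N y)).
Proof.
  intros Cf HU x Ux eps He.
  destruct (Cf _ (HU x Ux) eps He) as [d [Hd F]].
  pose proof (nrm_pos N).
  exists (d / (nrm N + 1)). split. apply Rdiv_lt_0_compat; lra.
  intros y Uy Hy. apply F; auto.
  eapply Rle_lt_trans. apply lin_dist.
  assert (0 <= dist2 y x) by (unfold dist2; eapply Rle_trans; [apply Rabs_pos| apply Rmax_l]).
  assert (dist2 y x * (nrm N + 1) < d).
  { apply Rmult_lt_reg_r with (/ (nrm N + 1)). apply Rinv_0_lt_compat; lra.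
    replace (dist2 y x * (nrm N + 1) * / (nrm N + 1)) with (dist2 y x) by (field; lra). exact Hy. }
  nra.
Qed.

Definition minv (M : mat2) : mat2 := Mat2 (m22 M) (- m12 M) (- m21 M) (m11 M).

Lemma minv_l M w : det2 M = 1 -> mat2_vec (minv M) (mat2_vec M w) = w.
Proof. destruct M, w; unfold det2, minv, mat2_vec; simpl; intros H.
  f_equal; nsatz. Qed.
Lemma minv_r M w : det2 M = 1 -> mat2_vec M (mat2_vec (minv M) w) = w.
Proof. destruct M, w; unfold det2, minv, mat2_vec; simpl; intros H.
  f_equal; nsatz. Qed.


Lemma partial1_lin f h x l1 l2 a b : partial1 f x l1 -> partial1 h x l2 ->
  partial1 (fun y => a * f y + b * h y) x (a * l1 + b * l2).
Proof. unfold partial1; intros; apply dpl_lin; auto. Qed.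
Lemma partial2_lin f h x l1 l2 a b : partial2 f x l1 -> partial2 h x l2 ->
  partial2 (fun y => a * f y + b * h y) x (a * l1 + b * l2).
Proof. unfold partial2; intros; apply dpl_lin; auto. Qed.

Lemma C1_lin U f h a b : C1_on U f -> C1_on U h -> C1_on U (fun y => a * f y + b * h y).
Proof.
  intros [f1 [f2 [Hf [Cf1 Cf2]]]] [h1 [h2 [Hh [Ch1 Ch2]]]].
  exists (fun y => a * f1 y + b * h1 y), (fun y => a * f2 y + b * h2 y).
  split; [|split; apply cont_lin; auto].
  intros x Ux. destruct (Hf x Ux), (Hh x Ux). split.
  apply partial1_lin; auto. apply partial2_lin; auto.
Qed.

Lemma curve_eq U G q1 q2 c1 c2 u0 d1 d2 F L r :
  open2 U -> (forall x, U x -> partial1 G x (q1 x) /\ partial2 G x (q2 x)) ->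
  cont2_on U q1 -> cont2_on U q2 -> U (c1 u0, c2 u0) ->
  derivable_pt_lim c1 u0 d1 -> derivable_pt_lim c2 u0 d2 -> 0 < r ->
  (forall u, Rabs (u - u0) < r -> G (c1 u, c2 u) = F u) -> derivable_pt_lim F u0 L ->
  q1 (c1 u0, c2 u0) * d1 + q2 (c1 u0, c2 u0) * d2 = L.
Proof.
  intros. apply (uniqueness_limite F u0); [| assumption].
  apply (deriv_local (fun u => G (c1 u, c2 u)) F u0 _ r); auto. apply (chain_curve U); auto.
Qed.

Lemma dpl_affine a b x : derivable_pt_lim (fun u => a * u + b) x a.
Proof.
  eapply dpl_ext. apply dpl_plus. apply dpl_mult. apply dpl_const. apply derivable_pt_lim_id.
  apply dpl_const. simpl. ring.
Qed.

Lemma C1_comp_lin (U U' : R * R -> Prop) G N : open2 U -> C1_on U G ->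
  (forall y, U' y -> U (mat2_vec N y)) -> C1_on U' (fun y => G (mat2_vec N y)).
Proof.
  intros HO [q1 [q2 [Hq [C1 C2]]]] HU.
  exists (fun y => m11 N * q1 (mat2_vec N y) + m21 N * q2 (mat2_vec N y)),
         (fun y => m12 N * q1 (mat2_vec N y) + m22 N * q2 (mat2_vec N y)).
  split; [| split; apply cont_lin; apply cont_comp_lin with U; auto].
  intros [y1 y2] Uy. split.
  - unfold partial1; simpl.
    eapply dpl_ext.
    apply (chain_curve U G q1 q2 (fun u => m11 N * u + m12 N * y2) (fun u => m21 N * u + m22 N * y2)
             y1 (m11 N) (m21 N)); auto.
    apply (HU _ Uy). apply dpl_affine. apply dpl_affine.
    unfold mat2_vec; simpl. ring.
  - unfold partial2; simpl.
    eapply dpl_ext.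
    apply (chain_curve U G q1 q2 (fun u => m11 N * y1 + m12 N * u) (fun u => m21 N * y1 + m22 N * u)
             y2 (m12 N) (m22 N)); auto.
    apply (HU _ Uy).
    apply (deriv_local (fun u => m12 N * u + m11 N * y1) _ _ _ 1); [lra| intros; ring| apply dpl_affine].
    apply (deriv_local (fun u => m22 N * u + m21 N * y1) _ _ _ 1); [lra| intros; ring| apply dpl_affine].
    unfold mat2_vec; simpl. ring.
Qed.


Lemma image_lin D v M y : det2 M = 1 ->
  (image2 D (fun x => mat2_vec M (v x)) y <-> image2 D v (mat2_vec (minv M) y)).
Proof.
  intros HM. split.
  - intros [x [Dx E]]. exists x. split; auto. rewrite <- E. rewrite minv_l; auto.
  - intros [x [Dx E]]. exists x. split; auto. rewrite E. rewrite minv_r; auto.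
Qed.

Lemma diffeo_lin D v M : det2 M = 1 -> diffeo_onto_image D v ->
  diffeo_onto_image D (fun x => mat2_vec M (v x)).
Proof.
  intros HM [HO [[Cv1 Cv2] [Inj [HOi [g [Hg1 [Hg2 [Cg1 Cg2]]]]]]]].
  split; [exact HO|]. split; [|split; [|split]].
  - split.
    + exact (C1_lin D _ _ (m11 M) (m12 M) Cv1 Cv2).
    + exact (C1_lin D _ _ (m21 M) (m22 M) Cv1 Cv2).
  - intros x y Dx Dy E. apply Inj; auto.
    rewrite <- (minv_l M (v x) HM). rewrite E. apply minv_l; auto.
  - intros y Hy. apply (image_lin D v M y HM) in Hy.
    destruct (HOi _ Hy) as [e [He HB]].
    pose proof (nrm_pos (minv M)).
    exists (e / (nrm (minv M) + 1)). split. apply Rdiv_lt_0_compat; lra.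
    intros z Hz. apply (image_lin D v M z HM). apply HB.
    eapply Rle_lt_trans. apply lin_dist.
    assert (0 <= dist2 z y) by (unfold dist2; eapply Rle_trans; [apply Rabs_pos| apply Rmax_l]).
    assert (dist2 z y * (nrm (minv M) + 1) < e).
    { apply Rmult_lt_reg_r with (/ (nrm (minv M) + 1)). apply Rinv_0_lt_compat; lra.
      replace (dist2 z y * (nrm (minv M) + 1) * / (nrm (minv M) + 1)) with (dist2 z y) by (field; lra).
      exact Hz. }
    nra.
  - exists (fun y => g (mat2_vec (minv M) y)). split; [|split].
    + intros x Dx. rewrite minv_l; auto.
    + intros y Hy. apply (image_lin D v M y HM) in Hy. destruct (Hg2 _ Hy) as [H1 H2].
      split; auto. rewrite H2. apply minv_r; auto.
    + assert (HU : forall y, image2 D (fun x => mat2_vec M (v x)) y -> image2 D v (mat2_vec (minv M) y)).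
      { intros y Hy; apply (image_lin D v M y HM); auto. }
      split.
      * exact (C1_comp_lin (image2 D v) _ (fun y => fst (g y)) (minv M) HOi Cg1 HU).
      * exact (C1_comp_lin (image2 D v) _ (fun y => snd (g y)) (minv M) HOi Cg2 HU).
Qed.

Lemma det_nz D v a l11 l12 l21 l22 : diffeo_onto_image D v -> D a ->
  partial1 (fun y => fst (v y)) a l11 -> partial2 (fun y => fst (v y)) a l12 ->
  partial1 (fun y => snd (v y)) a l21 -> partial2 (fun y => snd (v y)) a l22 ->
  l11 * l22 - l12 * l21 <> 0.
Proof.
  intros [HO [_ [_ [HOi [g [Hg1 [Hg2 [[q1 [q2 [Hq [Cq1 Cq2]]]] [r1 [r2 [Hr [Cr1 Cr2]]]]]]]]]]]] Da P11 P12 P21 P22.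
  destruct a as [a1 a2]. destruct (HO _ Da) as [e [He HB]].
  assert (Hy0 : image2 D v (fst (v (a1, a2)), snd (v (a1, a2)))).
  { exists (a1, a2). split; auto. apply surjective_pairing. }
  assert (DL1 : forall u, Rabs (u - a1) < e -> D (u, a2)).
  { intros u Hu. apply HB. unfold dist2; simpl. apply Rmax_lt. split; auto.
    replace (a2 - a2) with 0 by ring. rewrite Rabs_R0; auto. }
  assert (DL2 : forall u, Rabs (u - a2) < e -> D (a1, u)).
  { intros u Hu. apply HB. unfold dist2; simpl. apply Rmax_lt. split; auto.
    replace (a1 - a1) with 0 by ring. rewrite Rabs_R0; auto. }
  assert (E1 : q1 (fst (v (a1, a2)), snd (v (a1, a2))) * l11 + q2 (fst (v (a1, a2)), snd (v (a1, a2))) * l21 = 1).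
  { apply (curve_eq (image2 D v) (fun y => fst (g y)) q1 q2 (fun u => fst (v (u, a2))) (fun u => snd (v (u, a2)))
      a1 l11 l21 (fun u => u) 1 e); auto.
    intros u Hu. rewrite <- surjective_pairing. rewrite Hg1; auto.
    apply derivable_pt_lim_id. }
  assert (E2 : r1 (fst (v (a1, a2)), snd (v (a1, a2))) * l11 + r2 (fst (v (a1, a2)), snd (v (a1, a2))) * l21 = 0).
  { apply (curve_eq (image2 D v) (fun y => snd (g y)) r1 r2 (fun u => fst (v (u, a2))) (fun u => snd (v (u, a2)))
      a1 l11 l21 (fun _ => a2) 0 e); auto.
    intros u Hu. rewrite <- surjective_pairing. rewrite Hg1; auto.
    apply dpl_const. }
  assert (E3 : q1 (fst (v (a1, a2)), snd (v (a1, a2))) * l12 + q2 (fst (v (a1, a2)), snd (v (a1, a2))) * l22 = 0).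
  { apply (curve_eq (image2 D v) (fun y => fst (g y)) q1 q2 (fun u => fst (v (a1, u))) (fun u => snd (v (a1, u)))
      a2 l12 l22 (fun _ => a1) 0 e); auto.
    intros u Hu. rewrite <- surjective_pairing. rewrite Hg1; auto.
    apply dpl_const. }
  assert (E4 : r1 (fst (v (a1, a2)), snd (v (a1, a2))) * l12 + r2 (fst (v (a1, a2)), snd (v (a1, a2))) * l22 = 1).
  { apply (curve_eq (image2 D v) (fun y => snd (g y)) r1 r2 (fun u => fst (v (a1, u))) (fun u => snd (v (a1, u)))
      a2 l12 l22 (fun u => u) 1 e); auto.
    intros u Hu. rewrite <- surjective_pairing. rewrite Hg1; auto.
    apply derivable_pt_lim_id. }
  intro H0.
  set (Q1 := q1 (fst (v (a1, a2)), snd (v (a1, a2)))) in *.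
  set (Q2 := q2 (fst (v (a1, a2)), snd (v (a1, a2)))) in *.
  set (R1 := r1 (fst (v (a1, a2)), snd (v (a1, a2)))) in *.
  set (R2 := r2 (fst (v (a1, a2)), snd (v (a1, a2)))) in *.
  assert ((Q1 * l11 + Q2 * l21) * (R1 * l12 + R2 * l22) - (Q1 * l12 + Q2 * l22) * (R1 * l11 + R2 * l21)
     = (Q1 * R2 - Q2 * R1) * (l11 * l22 - l12 * l21)) as Id by ring.
  rewrite E1, E2, E3, E4, H0 in Id. lra.
Qed.


Lemma HD_of_hderiv f f' : hderiv f f' -> HD f f'.
Proof.
  intros H t Ht eps He. destruct (H t Ht eps He) as [d [Hd Hx]].
  exists d; split; [lra|]. intros h [[H1 H2] H3]. simpl in *. unfold R_dist, Q in *.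
  apply Hx; auto. replace h with (h - 0) by ring; auto.
Qed.

Definition mat2_mul (M N : mat2) : mat2 :=
  Mat2 (m11 M * m11 N + m12 M * m21 N) (m11 M * m12 N + m12 M * m22 N)
       (m21 M * m11 N + m22 M * m21 N) (m21 M * m12 N + m22 M * m22 N).

Definition A0f (C S c n k z : R) : mat2 := Mat2 (C*c+S*k) (-C*n+S*z) (C*n+S*z) (C*c-S*k).
Definition A1f (C S c n k z s1 m1 h1 : R) : mat2 :=
  Mat2 (s1*S*c - m1*C*n + s1*C*k - h1*S*z) (-s1*S*n - m1*C*c + s1*C*z + h1*S*k)
       (s1*S*n + m1*C*c + s1*C*z + h1*S*k) (s1*S*c - m1*C*n - s1*C*k + h1*S*z).
Definition A2f (C S c n k z s1 s2 m1 m2 h1 h2 : R) : mat2 :=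
  let DsSc := s2*S*c + s1*s1*C*c - s1*m1*S*n in
  let DmCn := m2*C*n + m1*s1*S*n + m1*m1*C*c in
  let DsCk := s2*C*k + s1*s1*S*k - s1*h1*C*z in
  let DhSz := h2*S*z + h1*s1*C*z + h1*h1*S*k in
  let DsSn := s2*S*n + s1*s1*C*n + s1*m1*S*c in
  let DmCc := m2*C*c + m1*s1*S*c - m1*m1*C*n in
  let DsCz := s2*C*z + s1*s1*S*z + s1*h1*C*k in
  let DhSk := h2*S*k + h1*s1*C*k - h1*h1*S*z in
  Mat2 (DsSc - DmCn + DsCk - DhSz) (- DsSn - DmCc + DsCz + DhSk)
       (DsSn + DmCc + DsCz + DhSk) (DsSc - DmCn - DsCk + DhSz).

Lemma cosh_sinh1 x : cosh x * cosh x - sinh x * sinh x = 1.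
Proof.
  unfold cosh, sinh. assert (exp x * exp (-x) = 1).
  { rewrite <- exp_plus. replace (x + - x) with 0 by ring. apply exp_0. }
  rewrite <- H. field.
Qed.
Lemma cos_sin1 x : cos x * cos x + sin x * sin x = 1.
Proof. pose proof (sin2_cos2 x). unfold Rsqr in H. lra. Qed.

Lemma psi_A0 s m t : psi s m t = A0f (cosh s) (sinh s) (cos m) (sin m) (cos t) (sin t).
Proof. unfold psi, A0f, mat2_add, mat2_scal, rot, refl; simpl; f_equal; ring. Qed.

Lemma det_psi s m t : det2 (psi s m t) = 1.
Proof.
  rewrite psi_A0. unfold det2, A0f; simpl.
  pose proof (cosh_sinh1 s). pose proof (cos_sin1 m). pose proof (cos_sin1 t). nsatz.
Qed.

Lemma det_mul M N : det2 (mat2_mul M N) = det2 M * det2 N.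
Proof. unfold det2, mat2_mul; simpl; ring. Qed.

Lemma sym_gen C S c n k z s1 s2 m1 m2 h1 h2 :
  C*C - S*S = 1 -> c*c+n*n = 1 -> k*k+z*z=1 ->
  2*C*S*s1*m1 + C*C*m2 - 2*S*C*s1*h1 - S*S*h2 = 0 ->
  m12 (mat2_mul (mat2_tr (A0f C S c n k z)) (A2f C S c n k z s1 s2 m1 m2 h1 h2)) =
  m21 (mat2_mul (mat2_tr (A0f C S c n k z)) (A2f C S c n k z s1 s2 m1 m2 h1 h2)).
Proof. intros. unfold mat2_mul, mat2_tr, A0f, A2f; simpl. nsatz. Qed.

Definition pquad (S : mat2) (f h : R) :=
  -(1/2) * (m11 S * f * f + (m12 S + m21 S) * f * h + m22 S * h * h).

Lemma partial1_quad S f h x l1 l2 : partial1 f x l1 -> partial1 h x l2 ->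
  partial1 (fun y => pquad S (f y) (h y)) x
    (-(1/2) * (m11 S * (2 * f x * l1) + (m12 S + m21 S) * (l1 * h x + f x * l2) + m22 S * (2 * h x * l2))).
Proof.
  unfold partial1, pquad; intros H1 H2. destruct x as [x1 x2]; simpl in *.
  eapply dpl_ext.
  apply dpl_mult. apply dpl_const. apply dpl_plus. apply dpl_plus.
  apply dpl_mult. apply dpl_mult. apply dpl_const. exact H1. exact H1.
  apply dpl_mult. apply dpl_mult. apply dpl_const. exact H1. exact H2.
  apply dpl_mult. apply dpl_mult. apply dpl_const. exact H2. exact H2.
  simpl. ring.
Qed.

Lemma partial2_quad S f h x l1 l2 : partial2 f x l1 -> partial2 h x l2 ->
  partial2 (fun y => pquad S (f y) (h y)) x
    (-(1/2) * (m11 S * (2 * f x * l1) + (m12 S + m21 S) * (l1 * h x + f x * l2) + m22 S * (2 * h x * l2))).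
Proof.
  unfold partial2, pquad; intros H1 H2. destruct x as [x1 x2]; simpl in *.
  eapply dpl_ext.
  apply dpl_mult. apply dpl_const. apply dpl_plus. apply dpl_plus.
  apply dpl_mult. apply dpl_mult. apply dpl_const. exact H1. exact H1.
  apply dpl_mult. apply dpl_mult. apply dpl_const. exact H1. exact H2.
  apply dpl_mult. apply dpl_mult. apply dpl_const. exact H2. exact H2.
  simpl. ring.
Qed.

Lemma press_id1 (A B P : mat2) (w : R * R) :
  m12 (mat2_mul (mat2_tr A) B) = m21 (mat2_mul (mat2_tr A) B) ->
  fst (mat2_vec (mat2_tr (mat2_mul A P)) (mat2_vec B w)) +
  (-(1/2) * (m11 (mat2_mul (mat2_tr A) B) * (2 * fst w * m11 P)
    + (m12 (mat2_mul (mat2_tr A) B) + m21 (mat2_mul (mat2_tr A) B)) * (m11 P * snd w + fst w * m21 P)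
    + m22 (mat2_mul (mat2_tr A) B) * (2 * snd w * m21 P))) = 0.
Proof. unfold mat2_mul, mat2_tr, mat2_vec; simpl. intros H.
  match goal with |- ?L = 0 => replace L with
   ((m11 A * m12 B + m21 A * m22 B - (m12 A * m11 B + m22 A * m21 B)) * (1/2) * (snd w * m11 P - fst w * m21 P)) by field end.
  rewrite H. ring. Qed.

Lemma press_id2 (A B P : mat2) (w : R * R) :
  m12 (mat2_mul (mat2_tr A) B) = m21 (mat2_mul (mat2_tr A) B) ->
  snd (mat2_vec (mat2_tr (mat2_mul A P)) (mat2_vec B w)) +
  (-(1/2) * (m11 (mat2_mul (mat2_tr A) B) * (2 * fst w * m12 P)
    + (m12 (mat2_mul (mat2_tr A) B) + m21 (mat2_mul (mat2_tr A) B)) * (m12 P * snd w + fst w * m22 P)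
    + m22 (mat2_mul (mat2_tr A) B) * (2 * snd w * m22 P))) = 0.
Proof. unfold mat2_mul, mat2_tr, mat2_vec; simpl. intros H.
  match goal with |- ?L = 0 => replace L with
   ((m11 A * m12 B + m21 A * m22 B - (m12 A * m11 B + m22 A * m21 B)) * (1/2) * (snd w * m12 P - fst w * m22 P)) by field end.
  rewrite H. ring. Qed.


Lemma HD_hderiv f f' : HD f f' -> hderiv f f'.
Proof. intros H. unfold hderiv. exact (hderiv_HD f f' H). Qed.

Theorem theorem4p2
  (D : R * R -> Prop) (v : R * R -> R * R)
  (s s1 s2 mu mu1 mu2 th th1 th2 : R -> R) :
  domain2 D ->
  diffeo_onto_image D v ->
  C2_half s s1 s2 -> C2_half mu mu1 mu2 -> C2_half th th1 th2 ->
  (exists c : R, forall t, 0 <= t ->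
     (cosh (s t))^2 * mu1 t - (sinh (s t))^2 * th1 t = c) ->
  lagrangian_euler_solution D
    (fun t a => mat2_vec (psi (s t) (mu t) (th t)) (v a)).
Proof.
  intros HDom Hv [Hs1 [Hs2 _]] [Hm1 [Hm2 _]] [Ht1 [Ht2 _]] [c Hc].
  apply HD_of_hderiv in Hs1, Hs2, Hm1, Hm2, Ht1, Ht2.
  pose proof Hv as Hv'.
  destruct Hv' as [HOD [[[p11 [p12 [Hp1 _]]] [p21 [p22 [Hp2 _]]]] _]].
  assert (Ecst : forall t, 0 <= t ->
    2 * cosh (s t) * sinh (s t) * s1 t * mu1 t + cosh (s t) * cosh (s t) * mu2 t
    - 2 * sinh (s t) * cosh (s t) * s1 t * th1 t - sinh (s t) * sinh (s t) * th2 t = 0).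
  { assert (HDc : HD (fun t => (cosh (s t))^2 * mu1 t - (sinh (s t))^2 * th1 t)
       (fun t => 2 * cosh (s t) * sinh (s t) * s1 t * mu1 t + cosh (s t) * cosh (s t) * mu2 t
    - 2 * sinh (s t) * cosh (s t) * s1 t * th1 t - sinh (s t) * sinh (s t) * th2 t)).
    { eapply HD_ext. hd. intros; simpl; ring. }
    intros t Ht. apply (HD_fext _ (fun _ => c)) in HDc; [|exact Hc].
    exact (HD_unique _ _ _ t HDc (HD_const c) Ht). }
  split.
  - intros t Ht. apply diffeo_lin; auto. apply det_psi.
  - exists (fun t a => mat2_mul (psi (s t) (mu t) (th t)) (Mat2 (p11 a) (p12 a) (p21 a) (p22 a))),
      (fun t a => mat2_vec (A1f (cosh (s t)) (sinh (s t)) (cos (mu t)) (sin (mu t)) (cos (th t)) (sin (th t))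
                   (s1 t) (mu1 t) (th1 t)) (v a)),
      (fun t a => mat2_vec (A2f (cosh (s t)) (sinh (s t)) (cos (mu t)) (sin (mu t)) (cos (th t)) (sin (th t))
                   (s1 t) (s2 t) (mu1 t) (mu2 t) (th1 t) (th2 t)) (v a)),
      (fun t y => pquad (mat2_mul (mat2_tr (psi (s t) (mu t) (th t)))
                   (A2f (cosh (s t)) (sinh (s t)) (cos (mu t)) (sin (mu t)) (cos (th t)) (sin (th t))
                   (s1 t) (s2 t) (mu1 t) (mu2 t) (th1 t) (th2 t))) (fst (v y)) (snd (v y))).
    split; [|split; [|split; [|split]]].
    + intros t a Ht Da. destruct (Hp1 a Da) as [H1 H2]. destruct (Hp2 a Da) as [H3 H4].
      split; [|split; [|split]].
      * exact (partial1_lin _ _ _ _ _ _ _ H1 H3).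
      * exact (partial2_lin _ _ _ _ _ _ _ H2 H4).
      * exact (partial1_lin _ _ _ _ _ _ _ H1 H3).
      * exact (partial2_lin _ _ _ _ _ _ _ H2 H4).
    + intros t a Ht Da. rewrite !det_mul, !det_psi. reflexivity.
    + intros a Da. rewrite det_mul, det_psi. destruct (Hp1 a Da) as [H1 H2]. destruct (Hp2 a Da) as [H3 H4].
      unfold det2; simpl. rewrite Rmult_1_l. exact (det_nz D v a _ _ _ _ Hv Da H1 H2 H3 H4).
    + intros a Da. split; [|split; [|split]]; apply HD_hderiv;
      (eapply HD_ext; [ cbn [fst snd mat2_vec psi mat2_add mat2_scal rot refl m11 m12 m21 m22 A1f A2f]; hd
                      | intros; cbn [fst snd mat2_vec psi mat2_add mat2_scal rot refl m11 m12 m21 m22 A1f A2f]; ring ]).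
    + intros t a Ht Da. destruct (Hp1 a Da) as [H1 H2]. destruct (Hp2 a Da) as [H3 H4].
      set (B := A2f (cosh (s t)) (sinh (s t)) (cos (mu t)) (sin (mu t)) (cos (th t)) (sin (th t))
                   (s1 t) (s2 t) (mu1 t) (mu2 t) (th1 t) (th2 t)).
      set (A := psi (s t) (mu t) (th t)).
      assert (Hsym : m12 (mat2_mul (mat2_tr A) B) = m21 (mat2_mul (mat2_tr A) B)).
      { unfold A, B. rewrite psi_A0. apply sym_gen.
        apply cosh_sinh1. apply cos_sin1. apply cos_sin1. apply Ecst; auto. }
      eexists; eexists; split; [|split; [|split]].
      * apply (partial1_quad (mat2_mul (mat2_tr A) B) _ _ a _ _ H1 H3).
      * apply (partial2_quad (mat2_mul (mat2_tr A) B) _ _ a _ _ H2 H4).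
      * exact (press_id1 A B (Mat2 (p11 a) (p12 a) (p21 a) (p22 a)) (v a) Hsym).
      * exact (press_id2 A B (Mat2 (p11 a) (p12 a) (p21 a) (p22 a)) (v a) Hsym).
Qed.
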